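(* Consider the following trajectory/sensing-instant optimization problem (SP2). Let $T_f>\tau_0>0$, an integer $L\ge1$, $T=LT_f$, $V_{\max}>0$. Decision variables are a trajectory $x:[0,T]\to\mathbb{R}$ with $|\dot{x}(t)|\le V_{\max}$ for all $t$, and sensing start instants $t_1,\dots,t_L$ with $[t_l,t_l+\tau_0]\subseteq[(l-1)T_f,lT_f]$ for each $l$, such that the UAV hovers during each sensing interval ($x$ is constant on $[t_l,t_l+\tau_0]$) and at each sensing location the sensing requirement is satisfiable, i.e. $\frac{MP_{\max}}{(D-x(t_l))^2+H^2}\ge\tilde{\Gamma}$. The objective is to maximize $\frac1T\int_0^T\tilde{R}(t)\,dt$, where $\tilde{R}(t)=\log_2(1+\gamma^*(x(t)))$ if $t\in\bigcup_{l}[t_l,t_l+\tau_0]$ and $\tilde{R}(t)=\log_2\!\big(1+\frac{\gamma_0 MP_{\max}}{x(t)^2+H^2}\big)$ otherwise; no initial or final location constraint is imposed. Then there always exists an optimal solution of (SP2) whose trajectory satisfies $x(t_1)=x(t_2)$ for all $t_1,t_2\in[0,T]$ with $t_1+t_2=nT_f$ for some even integer $n$.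
   Context: Setting: a UAV at horizontal position $x(t)$ and fixed altitude $H>0$ serves a single-antenna user at ground point $(0,0)$ and senses a target at ground point $(D,0)$, $D>0$, using an $M$-antenna half-wavelength uniform linear array, transmit power budget $P_{\max}$, noise power $\sigma^2$, reference channel power $\beta_0$, and $\gamma_0=\beta_0/\sigma^2$. Time $[0,T]$ is divided into $L$ ISAC frames of length $T_f$; in each frame the UAV must sense the target once for a period of length $\tau_0$. For a UAV location $x$, $\gamma^*(x)$ denotes the maximal user SNR $|\bm{h}_c^H\bm{w}|^2/\sigma^2$ over precoders $\bm{w}\in\mathbb{C}^M$ with $\|\bm{w}\|^2\le P_{\max}$ and beam pattern gain $|\bm{a}_v^H\bm{w}|^2\ge((D-x)^2+H^2)\tilde{\Gamma}$, where $\bm{h}_c=\sqrt{\beta_0/(x^2+H^2)}\,e^{-j2\pi\sqrt{x^2+H^2}/\lambda}\bm{a}_u$ and $\bm{a}_u,\bm{a}_v$ are the array response vectors $[1,e^{j\pi\sin\theta},\dots,e^{j\pi(M-1)\sin\theta}]^T$ with $\sin\theta=H/\sqrt{x^2+H^2}$ (user) and $\sin\theta=H/\sqrt{(D-x)^2+H^2}$ (target). Outside sensing periods the precoder is maximum ratio transmission toward the user, giving SNR $\gamma_0MP_{\max}/(x^2+H^2)$. *)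

(* Defs.v *)
From Stdlib Require Import Reals Lra ZArith ClassicalEpsilon.
From Coquelicot Require Import Coquelicot.
Open Scope R_scope.

Definition expj (th : R) : C := (cos th, sin th).

Fixpoint csum (f : nat -> C) (n : nat) : C :=
  match n with
  | O => RtoC 0
  | S k => Cplus (csum f k) (f k)
  end.

Fixpoint rsum (f : nat -> R) (n : nat) : R :=
  match n with
  | O => 0
  | S k => rsum f k + f k
  end.

(** Vectors of C^M are functions nat -> C (only the indices 0..M-1 matter). *)
Definition herm (M : nat) (a w : nat -> C) : C :=
  csum (fun m => Cmult (Cconj (a m)) (w m)) M.

Definition normsq (M : nat) (w : nat -> C) : R :=
  rsum (fun m => (Cmod (w m))^2) M.

(** Half-wavelength ULA response [1, e^{j pi s}, ..., e^{j pi (M-1) s}], s = sin theta. *)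
Definition arr (s : R) (m : nat) : C := expj (PI * INR m * s).

Definition a_u (H x : R) : nat -> C := arr (H / sqrt (x^2 + H^2)).
Definition a_v (H D x : R) : nat -> C := arr (H / sqrt ((D - x)^2 + H^2)).

Definition h_c (H beta0 lam x : R) (m : nat) : C :=
  Cmult (Cmult (RtoC (sqrt (beta0 / (x^2 + H^2))))
               (expj (- (2 * PI * sqrt (x^2 + H^2) / lam))))
        (a_u H x m).

Definition snr_set (M : nat) (H D Pmax sigma2 beta0 lam Gt x : R) (g : R) : Prop :=
  exists w : nat -> C,
    normsq M w <= Pmax /\
    (Cmod (herm M (a_v H D x) w))^2 >= ((D - x)^2 + H^2) * Gt /\
    g = (Cmod (herm M (h_c H beta0 lam x) w))^2 / sigma2.

Definition gamma_star (M : nat) (H D Pmax sigma2 beta0 lam Gt x : R) : R :=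
  real (Lub_Rbar (snr_set M H D Pmax sigma2 beta0 lam Gt x)).

Definition log2 (y : R) : R := ln y / ln 2.

Definition sensing (L : nat) (tau0 : R) (ts : nat -> R) (t : R) : Prop :=
  exists l : nat, (1 <= l <= L)%nat /\ ts l <= t <= ts l + tau0.

Definition rate (M L : nat) (H D Pmax sigma2 beta0 lam Gt tau0 : R)
    (x : R -> R) (ts : nat -> R) (t : R) : R :=
  if excluded_middle_informative (sensing L tau0 ts t)
  then log2 (1 + gamma_star M H D Pmax sigma2 beta0 lam Gt (x t))
  else log2 (1 + (beta0 / sigma2) * INR M * Pmax / ((x t)^2 + H^2)).

Definition objective (M L : nat) (H D Pmax sigma2 beta0 lam Gt tau0 Tf : R)
    (x : R -> R) (ts : nat -> R) : R :=
  RInt (rate M L H D Pmax sigma2 beta0 lam Gt tau0 x ts) 0 (INR L * Tf) / (INR L * Tf).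

(** Feasibility for (SP2). The speed constraint |x'(t)| <= Vmax is expressed as
    Vmax-Lipschitz continuity on [0,T]. *)
Definition feasible (M L : nat) (H D Pmax Gt tau0 Tf Vmax : R)
    (x : R -> R) (ts : nat -> R) : Prop :=
  (forall s u, 0 <= s <= INR L * Tf -> 0 <= u <= INR L * Tf ->
     Rabs (x s - x u) <= Vmax * Rabs (s - u)) /\
  (forall l : nat, (1 <= l <= L)%nat ->
     (INR l - 1) * Tf <= ts l /\ ts l + tau0 <= INR l * Tf /\
     (forall s, ts l <= s <= ts l + tau0 -> x s = x (ts l)) /\
     INR M * Pmax / ((D - x (ts l))^2 + H^2) >= Gt).

Definition optimal (M L : nat) (H D Pmax sigma2 beta0 lam Gt tau0 Tf Vmax : R)
    (x : R -> R) (ts : nat -> R) : Prop :=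
  feasible M L H D Pmax Gt tau0 Tf Vmax x ts /\
  forall (x' : R -> R) (ts' : nat -> R),
    feasible M L H D Pmax Gt tau0 Tf Vmax x' ts' ->
    objective M L H D Pmax sigma2 beta0 lam Gt tau0 Tf x' ts' <=
    objective M L H D Pmax sigma2 beta0 lam Gt tau0 Tf x ts.

(* Main.v *)
Require Import Defs.
From Stdlib Require Import Reals Lra Lia ZArith ClassicalEpsilon Classical.
From Coquelicot Require Import Coquelicot.
Open Scope R_scope.
Set Bullet Behavior "Strict Subproofs".

Lemma lip_cont_pt (f : R -> R) (K : R) :
  0 <= K -> (forall x y, Rabs (f x - f y) <= K * Rabs (x - y)) ->
  forall x, continuity_pt f x.
Proof.
  intros HK Hf x eps Heps.
  exists (eps / (K + 1)). split.
  - apply Rdiv_lt_0_compat; lra.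
  - intros y [_ Hy]. simpl in *. unfold R_dist in *.
    eapply Rle_lt_trans. apply Hf.
    apply Rle_lt_trans with ((K+1) * Rabs (y - x)).
    + apply Rmult_le_compat_r. apply Rabs_pos. lra.
    + apply Rmult_lt_reg_l with (/ (K+1)). apply Rinv_0_lt_compat; lra.
      rewrite <- Rmult_assoc, Rinv_l by lra. rewrite Rmult_1_l.
      unfold Rdiv in Hy. lra.
Qed.

Lemma lip_cont (f : R -> R) (K : R) :
  0 <= K -> (forall x y, Rabs (f x - f y) <= K * Rabs (x - y)) ->
  forall x, continuous f x.
Proof.
  intros HK Hf x. apply continuity_pt_filterlim. eapply lip_cont_pt; eauto.
Qed.

Lemma lip_ex_RInt (f : R -> R) (K : R) a b :
  0 <= K -> (forall x y, Rabs (f x - f y) <= K * Rabs (x - y)) ->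
  ex_RInt f a b.
Proof.
  intros HK Hf. apply (ex_RInt_continuous (V:=R_CompleteNormedModule)). intros z _. eapply lip_cont; eauto.
Qed.

Lemma Rmax0_lip a b : Rabs (Rmax a 0 - Rmax b 0) <= Rabs (a - b).
Proof. unfold Rmax; destruct (Rle_dec a 0), (Rle_dec b 0); split_Rabs; lra. Qed.

Lemma Rmax0_ge a : 0 <= Rmax a 0.
Proof. unfold Rmax; destruct (Rle_dec a 0); lra. Qed.

Lemma cv_comp (f : R -> R) (u : nat -> R) (l : R) :
  is_lim_seq u l -> ex_derive f l -> is_lim_seq (fun n => f (u n)) (f l).
Proof.
  intros Hu Hd. apply is_lim_seq_continuous; auto.
  apply continuity_pt_filterlim. apply (ex_derive_continuous (K:=R_AbsRing) (V:=R_NormedModule)). exact Hd.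
Qed.

Definition sincr (phi : nat -> nat) := forall n, (phi n < phi (S n))%nat.

Lemma sincr_lt phi : sincr phi -> forall a b, (a < b)%nat -> (phi a < phi b)%nat.
Proof.
  intros H a b Hab. induction Hab.
  - apply H.
  - specialize (H m). lia.
Qed.

Lemma sincr_ge phi : sincr phi -> forall n, (n <= phi n)%nat.
Proof. intros H n. induction n. lia. specialize (H n). lia. Qed.

Lemma sincr_comp phi psi : sincr phi -> sincr psi -> sincr (fun n => phi (psi n)).
Proof. intros H1 H2 n. apply sincr_lt; auto. Qed.

Fixpoint build (ch : nat -> nat -> nat) (n : nat) : nat :=
  match n with
  | O => ch O O
  | S n' => ch (S (build ch n')) (S n')
  end.

Lemma small_inv (e : R) : 0 < e -> exists N : nat, forall n, (N <= n)%nat -> / (INR n + 1) < e.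
Proof.
  intros He. destruct (INR_unbounded (/ e)) as [N HN]. exists N. intros n Hn.
  apply le_INR in Hn.
  assert (0 < / e) by (apply Rinv_0_lt_compat; lra).
  rewrite <- (Rinv_inv e).
  apply Rinv_lt_contravar. apply Rmult_lt_0_compat; lra. lra.
Qed.

Lemma bw1 (u : nat -> R) (B : R) : (forall n, Rabs (u n) <= B) ->
  exists phi (l : R), sincr phi /\ is_lim_seq (fun n => u (phi n)) l.
Proof.
  intros HB.
  destruct (Bolzano_Weierstrass u (fun c => -B <= c <= B) (compact_P3 (-B) B)) as [l Hl].
  { intros n. specialize (HB n). split_Rabs; lra. }
  assert (Hc : forall N k : nat, {p : nat | (N <= p)%nat /\ Rabs (u p - l) < / (INR k + 1)}).
  { intros N k. apply constructive_indefinite_description.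
    assert (Hpos : 0 < / (INR k + 1)).
    { apply Rinv_0_lt_compat. pose proof (pos_INR k). lra. }
    destruct (Hl (fun y => Rabs (y - l) < / (INR k + 1)) N) as [p [Hp1 Hp2]].
    - exists (mkposreal _ Hpos). intros y Hy. unfold disc in Hy. simpl in Hy. exact Hy.
    - exists p. auto. }
  set (ch := fun N k => proj1_sig (Hc N k)).
  exists (build ch), l. split.
  - intros n. change (build ch (S n)) with (ch (S (build ch n)) (S n)).
    set (b := build ch n). pose proof (proj1 (proj2_sig (Hc (S b) (S n)))).
    unfold ch. lia.
  - apply is_lim_seq_Reals. intros eps Heps.
    destruct (small_inv eps Heps) as [N HN]. exists N. intros n Hn.
    unfold R_dist.
    assert (Rabs (u (build ch n) - l) < / (INR n + 1)).
    { destruct n.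
      - exact (proj2 (proj2_sig (Hc 0%nat 0%nat))).
      - change (build ch (S n)) with (ch (S (build ch n)) (S n)).
        set (b := build ch n). exact (proj2 (proj2_sig (Hc (S b) (S n)))). }
    specialize (HN n ltac:(lia)). lra.
Qed.

Lemma extract (k : nat) : forall (u : nat -> nat -> R) (B : R),
  (forall n i, (i < k)%nat -> Rabs (u n i) <= B) ->
  exists phi (l : nat -> R), sincr phi /\
    forall i, (i < k)%nat -> is_lim_seq (fun n => u (phi n) i) (l i).
Proof.
  induction k as [|k IH]; intros u B HB.
  - exists (fun n => n), (fun _ => 0). split. intros n; lia. intros i Hi; lia.
  - destruct (IH u B) as [phi [l [Hphi Hl]]]. { intros n i Hi. apply HB. lia. }
    destruct (bw1 (fun n => u (phi n) k) B) as [psi [lk [Hpsi Hlk]]].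
    { intros n. apply HB. lia. }
    exists (fun n => phi (psi n)), (fun i => if Nat.eqb i k then lk else l i).
    split. apply sincr_comp; auto.
    intros i Hi. destruct (Nat.eqb_spec i k).
    + subst. exact Hlk.
    + apply (is_lim_seq_subseq (fun n => u (phi n) i) (l i) psi).
      apply eventually_subseq. exact Hpsi. apply Hl. lia.
Qed.

Definition cvC (z : nat -> C) (l : C) :=
  is_lim_seq (fun n => fst (z n)) (fst l) /\ is_lim_seq (fun n => snd (z n)) (snd l).

Lemma cvC_plus z1 z2 l1 l2 : cvC z1 l1 -> cvC z2 l2 ->
  cvC (fun n => Cplus (z1 n) (z2 n)) (Cplus l1 l2).
Proof.
  intros [A1 B1] [A2 B2]. split; simpl.
  - apply (is_lim_seq_plus' _ _ (fst l1) (fst l2)); auto.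
  - apply (is_lim_seq_plus' _ _ (snd l1) (snd l2)); auto.
Qed.

Lemma cvC_mult z1 z2 l1 l2 : cvC z1 l1 -> cvC z2 l2 ->
  cvC (fun n => Cmult (z1 n) (z2 n)) (Cmult l1 l2).
Proof.
  intros [A1 B1] [A2 B2]. split; simpl.
  - apply (is_lim_seq_minus' _ _ (fst l1 * fst l2) (snd l1 * snd l2));
    apply is_lim_seq_mult'; auto.
  - apply (is_lim_seq_plus' _ _ (fst l1 * snd l2) (snd l1 * fst l2));
    apply is_lim_seq_mult'; auto.
Qed.

Lemma cvC_conj z l : cvC z l -> cvC (fun n => Cconj (z n)) (Cconj l).
Proof.
  intros [A B]. split; simpl; auto. apply (is_lim_seq_opp _ (snd l)). auto.
Qed.

Lemma cvC_const c : cvC (fun _ => c) c.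
Proof. split; apply is_lim_seq_const. Qed.

Lemma cvC_csum (f : nat -> nat -> C) (g : nat -> C) M :
  (forall m, (m < M)%nat -> cvC (fun n => f n m) (g m)) ->
  cvC (fun n => csum (f n) M) (csum g M).
Proof.
  induction M; intros H; simpl.
  - apply cvC_const.
  - apply cvC_plus. apply IHM. intros; apply H; lia. apply H; lia.
Qed.

Lemma Cmod_sq z : Cmod z ^ 2 = fst z ^ 2 + snd z ^ 2.
Proof. unfold Cmod. rewrite pow2_sqrt. reflexivity. nra. Qed.

Lemma cv_Cmod2 z l : cvC z l -> is_lim_seq (fun n => Cmod (z n) ^ 2) (Cmod l ^ 2).
Proof.
  intros [A B]. rewrite Cmod_sq.
  apply is_lim_seq_ext with (fun n => fst (z n) ^ 2 + snd (z n) ^ 2).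
  { intros n; rewrite Cmod_sq; auto. }
  apply (is_lim_seq_plus' _ _ (fst l ^ 2) (snd l ^ 2)); simpl;
  repeat apply is_lim_seq_mult'; auto; apply is_lim_seq_const.
Qed.

Lemma cv_rsum (f : nat -> nat -> R) (g : nat -> R) M :
  (forall m, (m < M)%nat -> is_lim_seq (fun n => f n m) (g m)) ->
  is_lim_seq (fun n => rsum (f n) M) (rsum g M).
Proof.
  induction M; intros H; simpl.
  - apply is_lim_seq_const.
  - apply (is_lim_seq_plus' _ _ (rsum g M) (g M)). apply IHM. intros; apply H; lia. apply H; lia.
Qed.

Lemma lim_le_const (u : nat -> R) (l c : R) : is_lim_seq u l -> (forall n, u n <= c) -> l <= c.
Proof.
  intros Hu Hc. assert (H := is_lim_seq_le u (fun _ => c) l c Hc Hu (is_lim_seq_const c)).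
  exact H.
Qed.

Lemma lim_ge_const (u : nat -> R) (l c : R) : is_lim_seq u l -> (forall n, c <= u n) -> c <= l.
Proof.
  intros Hu Hc. assert (H := is_lim_seq_le (fun _ => c) u c l Hc (is_lim_seq_const c) Hu).
  exact H.
Qed.

Lemma lim_le (u v : nat -> R) (l1 l2 : R) : is_lim_seq u l1 -> is_lim_seq v l2 -> (forall n, u n <= v n) -> l1 <= l2.
Proof.
  intros Hu Hv Hc. exact (is_lim_seq_le u v l1 l2 Hc Hu Hv).
Qed.

Lemma rsum_nonneg (f : nat -> R) M : (forall i, 0 <= f i) -> 0 <= rsum f M.
Proof. intros Hf. induction M; simpl. lra. pose proof (Hf M). lra. Qed.

Lemma rsum_le_term (f : nat -> R) M m : (forall i, 0 <= f i) -> (m < M)%nat -> f m <= rsum f M.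
Proof.
  intros Hf. induction M; intros Hm. lia. simpl.
  destruct (Nat.eq_dec m M). subst. pose proof (rsum_nonneg f M Hf). lra.
  pose proof (Hf M). specialize (IHM ltac:(lia)). lra.
Qed.

Lemma rsum_const c M : rsum (fun _ => c) M = INR M * c.
Proof. induction M; simpl rsum. simpl; ring. rewrite IHM, S_INR. ring. Qed.

Lemma csum_const c M : csum (fun _ => RtoC c) M = RtoC (INR M * c).
Proof.
  induction M; simpl csum. unfold RtoC; simpl; f_equal; ring.
  rewrite IHM, S_INR. apply injective_projections; simpl; ring.
Qed.

Lemma rsum_le_c (f : nat -> R) c M : (forall i, (i < M)%nat -> f i <= c) -> rsum f M <= INR M * c.
Proof.
  induction M; intros H; simpl rsum. simpl; lra. rewrite S_INR.
  pose proof (H M ltac:(lia)). specialize (IHM ltac:(intros; apply H; lia)). lra.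
Qed.

Lemma rsum_ge_c (f : nat -> R) c M : (forall i, (i < M)%nat -> c <= f i) -> INR M * c <= rsum f M.
Proof.
  induction M; intros H; simpl rsum. simpl; lra. rewrite S_INR.
  pose proof (H M ltac:(lia)). specialize (IHM ltac:(intros; apply H; lia)). lra.
Qed.

Lemma Rabs_fst_le z : Rabs (fst z) <= Cmod z.
Proof.
  unfold Cmod. rewrite <- sqrt_Rsqr_abs. apply sqrt_le_1_alt. unfold Rsqr. nra.
Qed.

Lemma Rabs_snd_le z : Rabs (snd z) <= Cmod z.
Proof.
  unfold Cmod. rewrite <- sqrt_Rsqr_abs. apply sqrt_le_1_alt. unfold Rsqr. nra.
Qed.

Lemma ln2_pos : 0 < ln 2.
Proof. rewrite <- ln_1. apply ln_increasing; lra. Qed.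

Lemma ln_le_xm1 x : 0 < x -> ln x <= x - 1.
Proof. intros Hx. pose proof (exp_ineq1_le (ln x)). rewrite exp_ln in H; lra. Qed.

Lemma ln_lip1 u v : 1 <= u -> 1 <= v -> Rabs (ln u - ln v) <= Rabs (u - v).
Proof.
  intros Hu Hv.
  assert (K : forall a b, 1 <= a -> 1 <= b -> b <= a -> ln a - ln b <= a - b).
  { intros a b Ha Hb Hab. rewrite <- ln_div by lra.
    pose proof (ln_le_xm1 (a / b) ltac:(apply Rdiv_lt_0_compat; lra)).
    assert (a / b - 1 <= a - b).
    { unfold Rdiv. apply Rmult_le_reg_r with b. lra.
      rewrite Rmult_minus_distr_r, Rmult_assoc, Rinv_l, Rmult_1_r, Rmult_1_l by lra. nra. }
    lra. }
  destruct (Rle_dec v u).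
  - assert (0 <= ln u - ln v). { assert (ln v <= ln u) by (apply ln_le; lra). lra. }
    rewrite !Rabs_right by lra. apply K; lra.
  - assert (ln u <= ln v) by (apply ln_le; lra).
    rewrite Rabs_left1 by lra. rewrite Rabs_left1 by lra.
    pose proof (K v u Hv Hu ltac:(lra)). lra.
Qed.

Lemma ln_mono u v : 0 < u -> u <= v -> ln u <= ln v.
Proof. intros; apply ln_le; auto. Qed.

Section Main.
Variables (M L : nat) (H D Pmax sigma2 beta0 lam Gt tau0 Tf Vmax : R).
Hypotheses (HM : (1 <= M)%nat) (HL : (1 <= L)%nat) (HH : 0 < H) (HD : 0 < D)
  (HP : 0 < Pmax) (Hs2 : 0 < sigma2) (Hb0 : 0 < beta0) (Hlam : 0 < lam)
  (HGt : 0 < Gt) (HGt2 : Gt <= INR M * Pmax / H ^ 2) (Ht0 : 0 < tau0) (Ht0f : tau0 < Tf)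
  (HV : 0 < Vmax).

Definition Acoef := beta0 / sigma2 * INR M * Pmax.

Lemma Acoef_pos : 0 < Acoef.
Proof.
  unfold Acoef. assert (0 < INR M) by (apply lt_0_INR; lia).
  apply Rmult_lt_0_compat; auto. apply Rmult_lt_0_compat; auto. apply Rdiv_lt_0_compat; auto.
Qed.

Definition fc (y : R) : R := log2 (1 + beta0 / sigma2 * INR M * Pmax / (y ^ 2 + H ^ 2)).

Definition Lc := Acoef / (H ^ 3 * ln 2).

Lemma Lc_pos : 0 <= Lc.
Proof.
  unfold Lc. pose proof Acoef_pos. pose proof ln2_pos.
  apply Rlt_le, Rdiv_lt_0_compat; auto. apply Rmult_lt_0_compat; auto. apply pow_lt; auto.
Qed.

Lemma frac_lip y z : Rabs (Acoef / (y ^ 2 + H ^ 2) - Acoef / (z ^ 2 + H ^ 2))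
   <= Acoef / H ^ 3 * Rabs (y - z).
Proof.
  pose proof Acoef_pos as HA.
  set (Y := y ^ 2 + H ^ 2). set (Zz := z ^ 2 + H ^ 2).
  assert (HY : H ^ 2 <= Y) by (unfold Y; nra). assert (HZ : H ^ 2 <= Zz) by (unfold Zz; nra).
  assert (HH2 : 0 < H ^ 2) by nra.
  assert (HyY : 2 * Rabs y * H <= Y) by (unfold Y; pose proof (pow2_ge_0 (y - H)); pose proof (pow2_ge_0 (y + H)); split_Rabs; nra).
  assert (HzZ : 2 * Rabs z * H <= Zz) by (unfold Zz; pose proof (pow2_ge_0 (z - H)); pose proof (pow2_ge_0 (z + H)); split_Rabs; nra).
  assert (E : Acoef / Y - Acoef / Zz = Acoef * ((z - y) * (z + y)) / (Y * Zz)).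
  { unfold Y, Zz. field. split; nra. }
  rewrite E. unfold Rdiv. rewrite !Rabs_mult.
  rewrite (Rabs_right Acoef) by lra.
  rewrite (Rabs_right (/ (Y * Zz))) by (apply Rle_ge, Rlt_le, Rinv_0_lt_compat; nra).
  assert (Hs : Rabs (z + y) * H ^ 3 <= Y * Zz).
  { assert (Rabs (z + y) <= Rabs z + Rabs y) by apply Rabs_triang.
    assert (Rabs z * H ^ 3 <= Y * Zz / 2).
    { replace (Rabs z * H ^ 3) with ((Rabs z * H) * H ^ 2) by ring.
      assert (0 <= Rabs z * H) by (pose proof (Rabs_pos z); nra). nra. }
    assert (Rabs y * H ^ 3 <= Y * Zz / 2).
    { replace (Rabs y * H ^ 3) with ((Rabs y * H) * H ^ 2) by ring.
      assert (0 <= Rabs y * H) by (pose proof (Rabs_pos y); nra). nra. }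
    assert (0 < H ^ 3) by (apply pow_lt; auto). nra. }
  rewrite (Rabs_minus_sym y z).
  assert (0 < H ^ 3) by (apply pow_lt; auto).
  assert (0 < Y * Zz) by nra.
  apply Rmult_le_reg_r with (H ^ 3 * (Y * Zz)). nra.
  replace (Acoef * (Rabs (z - y) * Rabs (z + y)) * / (Y * Zz) * (H ^ 3 * (Y * Zz)))
    with (Acoef * Rabs (z - y) * (Rabs (z + y) * H ^ 3)) by (field; lra).
  replace (Acoef * / H ^ 3 * Rabs (z - y) * (H ^ 3 * (Y * Zz)))
    with (Acoef * Rabs (z - y) * (Y * Zz)) by (field; lra).
  apply Rmult_le_compat_l. pose proof (Rabs_pos (z - y)); nra. exact Hs.
Qed.

Lemma fc_lip y z : Rabs (fc y - fc z) <= Lc * Rabs (y - z).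
Proof.
  pose proof Acoef_pos as HA. pose proof ln2_pos.
  unfold fc, log2. fold Acoef.
  assert (0 <= Acoef / (y ^ 2 + H ^ 2)) by (apply Rlt_le, Rdiv_lt_0_compat; nra).
  assert (0 <= Acoef / (z ^ 2 + H ^ 2)) by (apply Rlt_le, Rdiv_lt_0_compat; nra).
  replace (ln (1 + Acoef / (y ^ 2 + H ^ 2)) / ln 2 - ln (1 + Acoef / (z ^ 2 + H ^ 2)) / ln 2)
    with ((ln (1 + Acoef / (y ^ 2 + H ^ 2)) - ln (1 + Acoef / (z ^ 2 + H ^ 2))) / ln 2) by (field; lra).
  unfold Rdiv at 1. rewrite Rabs_mult, (Rabs_right (/ ln 2)) by (apply Rle_ge, Rlt_le, Rinv_0_lt_compat; lra).
  eapply Rle_trans.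
  { apply Rmult_le_compat_r. apply Rlt_le, Rinv_0_lt_compat; lra.
    eapply Rle_trans. apply ln_lip1; lra.
    replace (1 + Acoef / (y ^ 2 + H ^ 2) - (1 + Acoef / (z ^ 2 + H ^ 2)))
      with (Acoef / (y ^ 2 + H ^ 2) - Acoef / (z ^ 2 + H ^ 2)) by ring.
    apply frac_lip. }
  unfold Lc. right. field. repeat split; try lra; try (apply pow_nonzero; lra).
Qed.

Lemma fc_anti y z : y ^ 2 <= z ^ 2 -> fc z <= fc y.
Proof.
  intros Hyz. pose proof Acoef_pos as HA. pose proof ln2_pos.
  unfold fc, log2. fold Acoef. unfold Rdiv at 3 4. apply Rmult_le_compat_r.
  apply Rlt_le, Rinv_0_lt_compat; lra.
  apply ln_mono.
  assert (0 <= Acoef / (z ^ 2 + H ^ 2)) by (apply Rlt_le, Rdiv_lt_0_compat; nra). lra.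
  apply Rplus_le_compat_l. unfold Rdiv. apply Rmult_le_compat_l. lra.
  apply Rinv_le_contravar; nra.
Qed.

Definition g (p u : R) : R := fc (Rmax (Rabs p - Vmax * u) 0).
Definition Fp (p a : R) : R := RInt (g p) 0 a.

Lemma g_lip_u p u v : Rabs (g p u - g p v) <= (Lc * Vmax) * Rabs (u - v).
Proof.
  unfold g. eapply Rle_trans. apply fc_lip. rewrite Rmult_assoc.
  apply Rmult_le_compat_l. apply Lc_pos.
  eapply Rle_trans. apply Rmax0_lip.
  replace (Rabs p - Vmax * u - (Rabs p - Vmax * v)) with (Vmax * (v - u)) by ring.
  rewrite Rabs_mult, Rabs_right by lra. rewrite Rabs_minus_sym. lra.
Qed.

Lemma g_lip_p p q u : Rabs (g p u - g q u) <= Lc * Rabs (p - q).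
Proof.
  unfold g. eapply Rle_trans. apply fc_lip.
  apply Rmult_le_compat_l. apply Lc_pos.
  eapply Rle_trans. apply Rmax0_lip.
  replace (Rabs p - Vmax * u - (Rabs q - Vmax * u)) with (Rabs p - Rabs q) by ring.
  apply Rabs_triang_inv2.
Qed.

Lemma g_mono p u v : u <= v -> g p u <= g p v.
Proof.
  intros Huv. unfold g. apply fc_anti.
  pose proof (Rmax0_ge (Rabs p - Vmax * u)). pose proof (Rmax0_ge (Rabs p - Vmax * v)).
  assert (Rmax (Rabs p - Vmax * v) 0 <= Rmax (Rabs p - Vmax * u) 0).
  { apply Rle_max_compat_r. nra. }
  nra.
Qed.

Lemma ex_RInt_g p a b : ex_RInt (g p) a b.
Proof.
  apply (lip_ex_RInt _ (Lc * Vmax)). pose proof Lc_pos. nra. apply g_lip_u.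
Qed.

Lemma Fp_lip p q a : 0 <= a -> Rabs (Fp p a - Fp q a) <= a * Lc * Rabs (p - q).
Proof.
  intros Ha. unfold Fp.
  replace (RInt (g p) 0 a - RInt (g q) 0 a) with (RInt (fun u => g p u - g q u) 0 a).
  2: { apply (RInt_minus (V:=R_CompleteNormedModule)); apply ex_RInt_g. }
  replace (a * Lc * Rabs (p - q)) with ((a - 0) * (Lc * Rabs (p - q))) by ring.
  apply abs_RInt_le_const. lra.
  apply (ex_RInt_minus (V:=R_NormedModule)); apply ex_RInt_g.
  intros t _. apply g_lip_p.
Qed.

Lemma int_right p c b : RInt (fun t => g p (t - c)) c b = Fp p (b - c).
Proof.
  unfold Fp.
  assert (E := RInt_comp_lin (V:=R_CompleteNormedModule) (g p) 1 (- c) c b (ex_RInt_g _ _ _)).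
  replace (1 * c + - c) with 0 in E by ring.
  replace (1 * b + - c) with (b - c) in E by ring.
  rewrite <- E. apply RInt_ext. intros x _.
  replace (1 * x + - c) with (x - c) by ring. symmetry. exact (scal_one (V:=R_NormedModule) _).
Qed.

Lemma int_left p a s : RInt (fun t => g p (s - t)) a s = Fp p (s - a).
Proof.
  unfold Fp.
  assert (Hex : ex_RInt (fun t => g p (s - t)) a s).
  { apply (lip_ex_RInt _ (Lc * Vmax)). pose proof Lc_pos. nra.
    intros x y. eapply Rle_trans. apply g_lip_u.
    replace (s - x - (s - y)) with (- (x - y)) by ring. rewrite Rabs_Ropp. lra. }
  assert (E := RInt_comp_lin (V:=R_CompleteNormedModule) (g p) (-1) s a s (ex_RInt_g _ _ _)).
  replace (-1 * a + s) with (s - a) in E by ring.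
  replace (-1 * s + s) with 0 in E by ring.
  rewrite <- (opp_RInt_swap (V:=R_CompleteNormedModule) (g p) 0 (s - a)) in E by apply ex_RInt_g.
  rewrite (RInt_ext _ (fun y => scal (-1) (g p (s - y)))) in E.
  2: { intros x _. replace (-1 * x + s) with (s - x) by ring. reflexivity. }
  rewrite (RInt_scal (V:=R_CompleteNormedModule)) in E by exact Hex.
  set (X := RInt (fun t => g p (s - t)) a s) in *.
  set (Y := RInt (g p) 0 (s - a)) in *.
  change (-1 * X = - Y) in E. lra.
Qed.

Lemma Fp_super p a b : 0 <= a -> 0 <= b -> Fp p a + Fp p b <= Fp p (a + b).
Proof.
  intros Ha Hb. unfold Fp.
  rewrite <- (RInt_Chasles (V:=R_CompleteNormedModule) (g p) 0 b (a + b)) by apply ex_RInt_g.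
  change (plus (RInt (g p) 0 b) (RInt (g p) b (a + b))) with (RInt (g p) 0 b + RInt (g p) b (a + b)).
  assert (RInt (g p) 0 a <= RInt (g p) b (a + b)).
  {
    assert (E3 := RInt_comp_lin (V:=R_CompleteNormedModule) (g p) 1 b 0 a (ex_RInt_g _ _ _)).
    replace (1 * 0 + b) with b in E3 by ring. replace (1 * a + b) with (a + b) in E3 by ring.
    rewrite <- E3.
    apply RInt_le. auto. apply ex_RInt_g.
    apply (lip_ex_RInt _ (Lc * Vmax)). pose proof Lc_pos. nra.
    intros x y. change (scal 1 (g p (1 * x + b)) - scal 1 (g p (1 * y + b))) with
      (1 * g p (1 * x + b) - 1 * g p (1 * y + b)).
    rewrite !Rmult_1_l. eapply Rle_trans. apply g_lip_u.
    replace (x + b - (y + b)) with (x - y) by ring. lra.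
    intros x Hx. change (scal 1 (g p (1 * x + b))) with (1 * g p (1 * x + b)).
    rewrite Rmult_1_l. apply g_mono. lra. }
  lra.
Qed.

Lemma Fp_0 p : Fp p 0 = 0.
Proof. unfold Fp. rewrite RInt_point. reflexivity. Qed.

Lemma ex_RInt_gl p s a b : ex_RInt (fun t => g p (s - t)) a b.
Proof.
  apply (lip_ex_RInt _ (Lc * Vmax)). pose proof Lc_pos. nra.
  intros x y. eapply Rle_trans. apply g_lip_u.
  replace (s - x - (s - y)) with (- (x - y)) by ring. rewrite Rabs_Ropp. lra.
Qed.

Lemma ex_RInt_gr p s a b : ex_RInt (fun t => g p (t - s)) a b.
Proof.
  apply (lip_ex_RInt _ (Lc * Vmax)). pose proof Lc_pos. nra.
  intros x y. eapply Rle_trans. apply g_lip_u.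
  replace (x - s - (y - s)) with (x - y) by ring. lra.
Qed.

Lemma ex_RInt_fcy (y : R -> R) Ky a b : 0 <= Ky ->
  (forall u v, Rabs (y u - y v) <= Ky * Rabs (u - v)) -> ex_RInt (fun t => fc (y t)) a b.
Proof.
  intros HK Hy. apply (lip_ex_RInt _ (Lc * Ky)). pose proof Lc_pos. nra.
  intros u v. eapply Rle_trans. apply fc_lip. rewrite Rmult_assoc.
  apply Rmult_le_compat_l. apply Lc_pos. apply Hy.
Qed.

Lemma frame_eq (r y : R -> R) a s b c Ky :
  a <= s -> s + tau0 <= b -> 0 <= Ky ->
  (forall u v, Rabs (y u - y v) <= Ky * Rabs (u - v)) ->
  (forall t, s <= t <= s + tau0 -> r t = c) ->
  (forall t, a < t < s -> r t = fc (y t)) ->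
  (forall t, s + tau0 < t < b -> r t = fc (y t)) ->
  ex_RInt r a b /\
  RInt r a b = RInt (fun t => fc (y t)) a s + tau0 * c + RInt (fun t => fc (y t)) (s + tau0) b.
Proof.
  intros Has Hsb HK Hy Hc Hl Hr.
  assert (E1 : forall x, Rmin a s < x < Rmax a s -> fc (y x) = r x).
  { intros x Hx. rewrite Rmin_left, Rmax_right in Hx by lra. symmetry. apply Hl; lra. }
  assert (E2 : forall x, Rmin s (s + tau0) < x < Rmax s (s + tau0) -> c = r x).
  { intros x Hx. rewrite Rmin_left, Rmax_right in Hx by lra. symmetry. apply Hc; lra. }
  assert (E3 : forall x, Rmin (s + tau0) b < x < Rmax (s + tau0) b -> fc (y x) = r x).
  { intros x Hx. rewrite Rmin_left, Rmax_right in Hx by lra. symmetry. apply Hr; lra. }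
  assert (X1 : ex_RInt r a s).
  { apply (ex_RInt_ext _ _ _ _ E1). eapply ex_RInt_fcy; eauto. }
  assert (X2 : ex_RInt r s (s + tau0)).
  { apply (ex_RInt_ext _ _ _ _ E2). apply ex_RInt_const. }
  assert (X3 : ex_RInt r (s + tau0) b).
  { apply (ex_RInt_ext _ _ _ _ E3). eapply ex_RInt_fcy; eauto. }
  assert (X12 : ex_RInt r a (s + tau0)) by (eapply ex_RInt_Chasles; eauto).
  split. eapply ex_RInt_Chasles; eauto.
  rewrite <- (RInt_Chasles (V:=R_CompleteNormedModule) r a (s + tau0) b) by auto.
  rewrite <- (RInt_Chasles (V:=R_CompleteNormedModule) r a s (s + tau0)) by auto.
  rewrite <- (RInt_ext _ _ _ _ E1), <- (RInt_ext _ _ _ _ E2), <- (RInt_ext _ _ _ _ E3).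
  rewrite RInt_const.
  change (RInt (fun t => fc (y t)) a s + (s + tau0 - s) * c + RInt (fun t => fc (y t)) (s + tau0) b =
          RInt (fun t => fc (y t)) a s + tau0 * c + RInt (fun t => fc (y t)) (s + tau0) b).
  replace (s + tau0 - s) with tau0 by ring. reflexivity.
Qed.

Lemma frame_upper (r y : R -> R) a s b c Ky p :
  a <= s -> s + tau0 <= b -> 0 <= Ky ->
  (forall u v, Rabs (y u - y v) <= Ky * Rabs (u - v)) ->
  (forall t, s <= t <= s + tau0 -> r t = c) ->
  (forall t, a < t < s -> r t = fc (y t)) ->
  (forall t, s + tau0 < t < b -> r t = fc (y t)) ->
  (forall t, a < t < s -> (Rmax (Rabs p - Vmax * (s - t)) 0) ^ 2 <= (y t) ^ 2) ->
  (forall t, s + tau0 < t < b -> (Rmax (Rabs p - Vmax * (t - (s + tau0))) 0) ^ 2 <= (y t) ^ 2) ->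
  ex_RInt r a b /\ RInt r a b <= tau0 * c + Fp p (b - a - tau0).
Proof.
  intros Has Hsb HK Hy Hc Hl Hr Bl Br.
  destruct (frame_eq r y a s b c Ky) as [Hex E]; auto.
  split; auto. rewrite E.
  assert (I1 : RInt (fun t => fc (y t)) a s <= Fp p (s - a)).
  { rewrite <- int_left. apply RInt_le; auto. eapply ex_RInt_fcy; eauto. apply ex_RInt_gl.
    intros x Hx. unfold g. apply fc_anti. apply Bl; auto. }
  assert (I2 : RInt (fun t => fc (y t)) (s + tau0) b <= Fp p (b - (s + tau0))).
  { rewrite <- int_right. apply RInt_le; auto. eapply ex_RInt_fcy; eauto. apply ex_RInt_gr.
    intros x Hx. unfold g. apply fc_anti. apply Br; auto. }
  pose proof (Fp_super p (s - a) (b - (s + tau0)) ltac:(lra) ltac:(lra)).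
  replace (s - a + (b - (s + tau0))) with (b - a - tau0) in H0 by ring.
  lra.
Qed.

Lemma frame_lower (r y : R -> R) a s b c Ky p :
  a <= s -> s + tau0 <= b -> 0 <= Ky -> (s = a \/ s + tau0 = b) ->
  (forall u v, Rabs (y u - y v) <= Ky * Rabs (u - v)) ->
  (forall t, s <= t <= s + tau0 -> r t = c) ->
  (forall t, a < t < s -> r t = fc (y t)) ->
  (forall t, s + tau0 < t < b -> r t = fc (y t)) ->
  (forall t, a < t < s -> (y t) ^ 2 <= (Rmax (Rabs p - Vmax * (s - t)) 0) ^ 2) ->
  (forall t, s + tau0 < t < b -> (y t) ^ 2 <= (Rmax (Rabs p - Vmax * (t - (s + tau0))) 0) ^ 2) ->
  ex_RInt r a b /\ tau0 * c + Fp p (b - a - tau0) <= RInt r a b.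
Proof.
  intros Has Hsb HK Hab Hy Hc Hl Hr Bl Br.
  destruct (frame_eq r y a s b c Ky) as [Hex E]; auto.
  split; auto. rewrite E.
  assert (I1 : Fp p (s - a) <= RInt (fun t => fc (y t)) a s).
  { rewrite <- int_left. apply RInt_le; auto. apply ex_RInt_gl. eapply ex_RInt_fcy; eauto.
    intros x Hx. unfold g. apply fc_anti. apply Bl; auto. }
  assert (I2 : Fp p (b - (s + tau0)) <= RInt (fun t => fc (y t)) (s + tau0) b).
  { rewrite <- int_right. apply RInt_le; auto. apply ex_RInt_gr. eapply ex_RInt_fcy; eauto.
    intros x Hx. unfold g. apply fc_anti. apply Br; auto. }
  destruct Hab as [Hab | Hab].
  - subst s. replace (a - a) with 0 in I1 by ring. rewrite Fp_0 in I1.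
    replace (b - (a + tau0)) with (b - a - tau0) in I2 by ring. lra.
  - replace (b - (s + tau0)) with 0 in I2 by lra. rewrite Fp_0 in I2.
    replace (s - a) with (b - a - tau0) in I1 by lra. lra.
Qed.

Definition fs (y : R) : R := log2 (1 + gamma_star M H D Pmax sigma2 beta0 lam Gt y).

Definition ts_ok (x : R -> R) (ts : nat -> R) :=
  forall l : nat, (1 <= l <= L)%nat ->
     (INR l - 1) * Tf <= ts l /\ ts l + tau0 <= INR l * Tf /\
     (forall s, ts l <= s <= ts l + tau0 -> x s = x (ts l)).

Lemma Tf_pos : 0 < Tf.
Proof. lra. Qed.

Lemma not_sensing x ts l t : ts_ok x ts -> (1 <= l <= L)%nat ->
  (INR l - 1) * Tf < t < INR l * Tf -> (t < ts l \/ ts l + tau0 < t) ->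
  ~ sensing L tau0 ts t.
Proof.
  intros Hok Hl Ht Hout [l' [Hl' Ht']].
  destruct (Hok l Hl) as [A1 [A2 _]]. destruct (Hok l' Hl') as [B1 [B2 _]].
  destruct (Nat.lt_total l' l) as [Hlt | [Heq | Hgt]].
  - assert (INR l' <= INR l - 1).
    { replace l with (S (l - 1)) by lia. rewrite S_INR.
      replace (INR (l - 1) + 1 - 1) with (INR (l - 1)) by ring. apply le_INR. lia. }
    assert (INR l' * Tf <= (INR l - 1) * Tf) by (apply Rmult_le_compat_r; lra). lra.
  - subst. lra.
  - assert (INR l <= INR l' - 1).
    { replace l' with (S (l' - 1)) by lia. rewrite S_INR.
      replace (INR (l' - 1) + 1 - 1) with (INR (l' - 1)) by ring. apply le_INR. lia. }
    assert (INR l * Tf <= (INR l' - 1) * Tf) by (apply Rmult_le_compat_r; lra). lra.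
Qed.

Lemma rate_frame x ts l : ts_ok x ts -> (1 <= l <= L)%nat ->
  (forall t, ts l <= t <= ts l + tau0 ->
     rate M L H D Pmax sigma2 beta0 lam Gt tau0 x ts t = fs (x (ts l))) /\
  (forall t, (INR l - 1) * Tf < t < ts l ->
     rate M L H D Pmax sigma2 beta0 lam Gt tau0 x ts t = fc (x t)) /\
  (forall t, ts l + tau0 < t < INR l * Tf ->
     rate M L H D Pmax sigma2 beta0 lam Gt tau0 x ts t = fc (x t)).
Proof.
  intros Hok Hl. destruct (Hok l Hl) as [A1 [A2 A3]].
  split; [|split]; intros t Ht; unfold rate;
    destruct (excluded_middle_informative (sensing L tau0 ts t)) as [Hs | Hs].
  - unfold fs. rewrite (A3 t Ht). reflexivity.
  - exfalso. apply Hs. exists l. auto.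
  - exfalso. revert Hs. apply (not_sensing x ts l t Hok Hl). lra. lra.
  - reflexivity.
  - exfalso. revert Hs. apply (not_sensing x ts l t Hok Hl). lra. lra.
  - reflexivity.
Qed.

Lemma sum_frames (r : R -> R) n :
  (forall i, (i < n)%nat -> ex_RInt r (INR i * Tf) (INR (S i) * Tf)) ->
  ex_RInt r 0 (INR n * Tf) /\
  RInt r 0 (INR n * Tf) = rsum (fun i => RInt r (INR i * Tf) (INR (S i) * Tf)) n.
Proof.
  induction n; intros Hi.
  - replace (INR 0 * Tf) with 0 by (simpl; ring). split. apply ex_RInt_point.
    rewrite RInt_point. reflexivity.
  - destruct IHn as [IH1 IH2]. intros; apply Hi; lia.
    assert (X := Hi n ltac:(lia)).
    split. eapply ex_RInt_Chasles; eauto.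
    rewrite <- (RInt_Chasles (V:=R_CompleteNormedModule) r 0 (INR n * Tf) (INR (S n) * Tf)) by auto.
    rewrite IH2. reflexivity.
Qed.

Lemma rmax_sq_le p y d : Rabs (y - p) <= d -> (Rmax (Rabs p - d) 0) ^ 2 <= y ^ 2.
Proof.
  intros Hd. assert (Rmax (Rabs p - d) 0 <= Rabs y).
  { apply Rmax_lub. pose proof (Rabs_triang_inv p y). rewrite Rabs_minus_sym in Hd. lra. apply Rabs_pos. }
  pose proof (Rmax0_ge (Rabs p - d)).
  replace (y ^ 2) with (Rabs y ^ 2) by (rewrite <- Rsqr_pow2, <- Rsqr_abs, Rsqr_pow2; reflexivity).
  nra.
Qed.

Definition clampT (t : R) := Rmax 0 (Rmin t (INR L * Tf)).

Lemma clampT_lip u v : Rabs (clampT u - clampT v) <= Rabs (u - v).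
Proof.
  unfold clampT.
  assert (K1 : forall a b c, Rabs (Rmin a c - Rmin b c) <= Rabs (a - b)).
  { intros a b c. unfold Rmin. destruct (Rle_dec a c), (Rle_dec b c); split_Rabs; lra. }
  assert (K2 : forall a b, Rabs (Rmax 0 a - Rmax 0 b) <= Rabs (a - b)).
  { intros a b. unfold Rmax. destruct (Rle_dec 0 a), (Rle_dec 0 b); split_Rabs; lra. }
  eapply Rle_trans. apply K2. apply K1.
Qed.

Lemma T_pos : 0 <= INR L * Tf.
Proof. pose proof (pos_INR L). nra. Qed.

Lemma clampT_in t : 0 <= clampT t <= INR L * Tf.
Proof.
  pose proof T_pos. unfold clampT. pose proof (Rmin_r t (INR L * Tf)).
  pose proof (Rmax_l 0 (Rmin t (INR L * Tf))). split. lra.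
  apply Rmax_lub; lra.
Qed.

Lemma clampT_id t : 0 <= t <= INR L * Tf -> clampT t = t.
Proof.
  intros Ht. unfold clampT. rewrite Rmin_left by lra. rewrite Rmax_right by lra. reflexivity.
Qed.

Lemma INR_l_ge1 l : (1 <= l)%nat -> 1 <= INR l.
Proof. intros Hl. apply le_INR in Hl. simpl in Hl. exact Hl. Qed.

Lemma frame_in l t : (1 <= l <= L)%nat -> (INR l - 1) * Tf <= t <= INR l * Tf -> 0 <= t <= INR L * Tf.
Proof.
  intros [Hl1 Hl2] Ht. pose proof (INR_l_ge1 l Hl1). apply le_INR in Hl2.
  assert (0 <= (INR l - 1) * Tf) by (apply Rmult_le_pos; lra).
  assert (INR l * Tf <= INR L * Tf) by (apply Rmult_le_compat_r; lra). lra.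
Qed.

Lemma upper_frame x ts l : feasible M L H D Pmax Gt tau0 Tf Vmax x ts -> (1 <= l <= L)%nat ->
  ex_RInt (rate M L H D Pmax sigma2 beta0 lam Gt tau0 x ts) ((INR l - 1) * Tf) (INR l * Tf) /\
  RInt (rate M L H D Pmax sigma2 beta0 lam Gt tau0 x ts) ((INR l - 1) * Tf) (INR l * Tf)
    <= tau0 * fs (x (ts l)) + Fp (x (ts l)) (Tf - tau0).
Proof.
  intros [Hlip Hf] Hl.
  assert (Hok : ts_ok x ts). { intros l' Hl'. destruct (Hf l' Hl') as [A [B [C _]]]. auto. }
  destruct (Hf l Hl) as [A1 [A2 [A3 _]]].
  destruct (rate_frame x ts l Hok Hl) as [R1 [R2 R3]].
  set (yc := fun t => x (clampT t)).
  assert (Hyc : forall t, (INR l - 1) * Tf <= t <= INR l * Tf -> yc t = x t).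
  { intros t Ht. unfold yc. rewrite clampT_id. auto. eapply frame_in; eauto. }
  assert (Hin : forall t, (INR l - 1) * Tf <= t <= INR l * Tf -> 0 <= t <= INR L * Tf).
  { intros; eapply frame_in; eauto. }
  replace (Tf - tau0) with (INR l * Tf - (INR l - 1) * Tf - tau0) by ring.
  apply (frame_upper _ yc _ (ts l) _ _ Vmax); try lra.
  - intros u v. unfold yc. eapply Rle_trans. apply Hlip; apply clampT_in.
    apply Rmult_le_compat_l. lra. apply clampT_lip.
  - intros t Ht. apply R1; auto.
  - intros t Ht. rewrite Hyc by lra. apply R2; auto.
  - intros t Ht. rewrite Hyc by lra. apply R3; auto.
  - intros t Ht. rewrite Hyc by lra. apply rmax_sq_le.
    eapply Rle_trans. apply Hlip; apply Hin; lra.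
    rewrite Rabs_left1 by lra. right; ring.
  - intros t Ht. rewrite Hyc by lra. apply rmax_sq_le.
    rewrite <- (A3 (ts l + tau0)) by lra.
    eapply Rle_trans. apply Hlip; apply Hin; lra.
    rewrite Rabs_right by lra. right; ring.
Qed.

Lemma int_sep (a b : Z) : a <> b -> 1 <= Rabs (IZR a - IZR b).
Proof.
  intros Hab. rewrite Z_R_minus.
  destruct (Z.lt_total a b) as [Hlt | [Heq | Hgt]].
  - assert (IZR (a - b) <= -1) by (apply IZR_le; lia).
    rewrite Rabs_left1 by lra. lra.
  - contradiction.
  - assert (1 <= IZR (a - b)) by (apply IZR_le; lia).
    rewrite Rabs_right by lra. lra.
Qed.

Definition kt (t : R) : Z := up (t / (2 * Tf) - / 2).
Definition tri (t : R) : R := Rabs (t - 2 * Tf * IZR (kt t)).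

Lemma tri_le_Tf t : tri t <= Tf.
Proof.
  unfold tri, kt. destruct (archimed (t / (2 * Tf) - / 2)) as [A1 A2].
  set (k := IZR (up (t / (2 * Tf) - / 2))) in *.
  replace (t - 2 * Tf * k) with (2 * Tf * (t / (2 * Tf) - k)) by (field; lra).
  rewrite Rabs_mult, Rabs_right by lra.
  assert (Rabs (t / (2 * Tf) - k) <= / 2) by (split_Rabs; lra). nra.
Qed.

Lemma sep2 t (a b : Z) : a <> b -> 2 * Tf <= Rabs (t - 2 * Tf * IZR a) + Rabs (t - 2 * Tf * IZR b).
Proof.
  intros Hab. pose proof (int_sep a b Hab).
  assert (2 * Tf * Rabs (IZR a - IZR b) = Rabs ((t - 2 * Tf * IZR b) - (t - 2 * Tf * IZR a))).
  { replace ((t - 2 * Tf * IZR b) - (t - 2 * Tf * IZR a)) with (2 * Tf * (IZR a - IZR b)) by ring.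
    rewrite Rabs_mult, (Rabs_right (2 * Tf)) by lra. reflexivity. }
  assert (Rabs ((t - 2 * Tf * IZR b) - (t - 2 * Tf * IZR a)) <=
          Rabs (t - 2 * Tf * IZR a) + Rabs (t - 2 * Tf * IZR b)) by (split_Rabs; lra).
  assert (2 * Tf * 1 <= 2 * Tf * Rabs (IZR a - IZR b)) by (apply Rmult_le_compat_l; lra).
  lra.
Qed.

Lemma tri_min t (j : Z) : tri t <= Rabs (t - 2 * Tf * IZR j).
Proof.
  destruct (Z.eq_dec (kt t) j) as [E | E].
  - unfold tri. rewrite E. lra.
  - pose proof (sep2 t _ _ E). pose proof (tri_le_Tf t). unfold tri in *. lra.
Qed.

Lemma tri_eq t (j : Z) : Rabs (t - 2 * Tf * IZR j) <= Tf -> tri t = Rabs (t - 2 * Tf * IZR j).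
Proof.
  intros Hj. apply Rle_antisym. apply tri_min.
  destruct (Z.eq_dec (kt t) j) as [E | E].
  - unfold tri. rewrite E. lra.
  - pose proof (sep2 t _ _ E). unfold tri. lra.
Qed.

Lemma tri_lip s u : Rabs (tri s - tri u) <= Rabs (s - u).
Proof.
  assert (K : forall a b, tri a <= tri b + Rabs (a - b)).
  { intros a b. eapply Rle_trans. apply (tri_min a (kt b)). unfold tri.
    replace (a - 2 * Tf * IZR (kt b)) with ((a - b) + (b - 2 * Tf * IZR (kt b))) by ring.
    eapply Rle_trans. apply Rabs_triang. lra. }
  pose proof (K s u). pose proof (K u s). rewrite Rabs_minus_sym in H1. split_Rabs; lra.
Qed.

Lemma tri_sym t1 t2 : (exists n : Z, Z.Even n /\ t1 + t2 = IZR n * Tf) -> tri t1 = tri t2.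
Proof.
  intros [n [[m Hm] Ht]]. subst n. rewrite mult_IZR in Ht.
  assert (K : forall a b, a + b = 2 * IZR m * Tf -> tri b <= tri a).
  { intros a b Hab. eapply Rle_trans. apply (tri_min b (m - kt a)). unfold tri.
    rewrite minus_IZR. replace (b - 2 * Tf * (IZR m - IZR (kt a))) with (- (a - 2 * Tf * IZR (kt a))) by nra.
    rewrite Rabs_Ropp. lra. }
  apply Rle_antisym; apply K; simpl in Ht; lra.
Qed.

Definition sg (p : R) : R := if Rlt_dec p 0 then -1 else 1.

Definition xs (p t : R) : R := sg p * Rmax (Rabs p - Vmax * Rmax (tri t - tau0) 0) 0.

Definition tss (l : nat) : R :=
  if Nat.odd l then 2 * INR (Nat.div2 l) * Tf else 2 * INR (Nat.div2 l) * Tf - tau0.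

Lemma sg_abs p : Rabs (sg p) = 1.
Proof. unfold sg. destruct (Rlt_dec p 0); [rewrite Rabs_left by lra | rewrite Rabs_right by lra]; ring. Qed.

Lemma xs_lip p u v : Rabs (xs p u - xs p v) <= Vmax * Rabs (u - v).
Proof.
  unfold xs. rewrite <- Rmult_minus_distr_l, Rabs_mult, sg_abs, Rmult_1_l.
  eapply Rle_trans. apply Rmax0_lip.
  replace (Rabs p - Vmax * Rmax (tri u - tau0) 0 - (Rabs p - Vmax * Rmax (tri v - tau0) 0))
    with (Vmax * (Rmax (tri v - tau0) 0 - Rmax (tri u - tau0) 0)) by ring.
  rewrite Rabs_mult, (Rabs_right Vmax) by lra. apply Rmult_le_compat_l. lra.
  rewrite Rabs_minus_sym. eapply Rle_trans. apply Rmax0_lip.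
  replace (tri u - tau0 - (tri v - tau0)) with (tri u - tri v) by ring. apply tri_lip.
Qed.

Lemma xs_hover p t : tri t <= tau0 -> xs p t = p.
Proof.
  intros Ht. unfold xs. rewrite (Rmax_right (tri t - tau0) 0) by lra.
  rewrite Rmult_0_r, Rminus_0_r. rewrite Rmax_left by apply Rabs_pos.
  unfold sg. destruct (Rlt_dec p 0). rewrite Rabs_left by lra. ring. rewrite Rabs_right by lra. ring.
Qed.

Lemma xs_sq p t : (xs p t) ^ 2 = (Rmax (Rabs p - Vmax * Rmax (tri t - tau0) 0) 0) ^ 2.
Proof.
  unfold xs. rewrite Rpow_mult_distr. replace (sg p ^ 2) with 1. ring.
  unfold sg. destruct (Rlt_dec p 0); ring.
Qed.

Lemma xs_sym p t1 t2 : (exists n : Z, Z.Even n /\ t1 + t2 = IZR n * Tf) -> xs p t1 = xs p t2.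
Proof. intros Hn. unfold xs. rewrite (tri_sym t1 t2 Hn). reflexivity. Qed.

Lemma tss_facts l : (1 <= l)%nat ->
  (INR l - 1) * Tf <= tss l /\ tss l + tau0 <= INR l * Tf /\
  (forall s, tss l <= s <= tss l + tau0 -> tri s <= tau0) /\
  (tss l = (INR l - 1) * Tf \/ tss l + tau0 = INR l * Tf) /\
  (forall t, (INR l - 1) * Tf < t < tss l -> tri t - tau0 = tss l - t) /\
  (forall t, tss l + tau0 < t < INR l * Tf -> tri t - tau0 = t - (tss l + tau0)).
Proof.
  intros Hl. pose proof (Nat.div2_odd l) as E. unfold tss.
  set (j := Nat.div2 l) in *.
  assert (Ej : INR j = IZR (Z.of_nat j)) by apply INR_IZR_INZ.
  destruct (Nat.odd l).
  { assert (HEl : INR l = 2 * INR j + 1).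
    { rewrite E at 1. simpl Nat.b2n. rewrite plus_INR, mult_INR. simpl. ring. }
    rewrite HEl. repeat split; try lra.
    all: try (left; lra); try (right; lra).
    all: intros. all: try lra. all: first [lra | (eapply Rle_trans; [apply (tri_min _ (Z.of_nat j)) | rewrite <- Ej; split_Rabs; lra])
                  | (rewrite (tri_eq _ (Z.of_nat j)); rewrite <- Ej; split_Rabs; lra)]. }
  { assert (HEl : INR l = 2 * INR j).
    { rewrite E at 1. simpl Nat.b2n. rewrite Nat.add_0_r, mult_INR. simpl. ring. }
    rewrite HEl. repeat split; try lra.
    all: try (left; lra); try (right; lra).
    all: intros. all: try lra. all: first [lra | (eapply Rle_trans; [apply (tri_min _ (Z.of_nat j)) | rewrite <- Ej; split_Rabs; lra])
                  | (rewrite (tri_eq _ (Z.of_nat j)); rewrite <- Ej; split_Rabs; lra)]. }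
Qed.

Lemma cand_ok p : ts_ok (xs p) tss.
Proof.
  intros l [Hl _]. destruct (tss_facts l Hl) as [A1 [A2 [A3 _]]].
  repeat split; auto. intros s Hs. rewrite !xs_hover; auto. apply A3; lra.
Qed.

Lemma cand_frame p l : (1 <= l <= L)%nat ->
  ex_RInt (rate M L H D Pmax sigma2 beta0 lam Gt tau0 (xs p) tss) ((INR l - 1) * Tf) (INR l * Tf) /\
  tau0 * fs p + Fp p (Tf - tau0) <=
  RInt (rate M L H D Pmax sigma2 beta0 lam Gt tau0 (xs p) tss) ((INR l - 1) * Tf) (INR l * Tf).
Proof.
  intros Hl. destruct (tss_facts l (proj1 Hl)) as [A1 [A2 [A3 [A4 [A5 A6]]]]].
  destruct (rate_frame (xs p) tss l (cand_ok p) Hl) as [R1 [R2 R3]].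
  assert (Hp : xs p (tss l) = p) by (apply xs_hover, A3; lra).
  rewrite Hp in R1.
  replace (Tf - tau0) with (INR l * Tf - (INR l - 1) * Tf - tau0) by ring.
  apply (frame_lower _ (xs p) _ (tss l) _ _ Vmax); try lra; auto.
  - intros u v. apply xs_lip.
  - intros t Ht. rewrite xs_sq, A5 by auto. rewrite (Rmax_left (tss l - t) 0) by lra. lra.
  - intros t Ht. rewrite xs_sq, A6 by auto. rewrite (Rmax_left (t - (tss l + tau0)) 0) by lra. lra.
Qed.

Ltac side_tac := repeat split; repeat match goal with
 | |- ?x <> 0 => apply Rgt_not_eq
 | |- ?x > 0 => unfold Rgt
 | |- sqrt _ > 0 => apply sqrt_lt_R0
 | |- 0 < sqrt _ => apply sqrt_lt_R0
 | |- 0 < _ * / _ => apply Rmult_lt_0_compat; [|apply Rinv_0_lt_compat]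
 end; try nra; try (pose proof (Rmult_lt_0_compat H H HH HH); nra);
 try (match goal with |- 0 < ?a * (?a * 1) + _ => pose proof (Rle_0_sqr a); unfold Rsqr in *; pose proof (Rmult_lt_0_compat H H HH HH); nra end).

Definition feasp (p : R) := INR M * Pmax / ((D - p) ^ 2 + H ^ 2) >= Gt.

Definition Kset (p : R) (w : nat -> C) :=
  feasp p /\ normsq M w <= Pmax /\
  (Cmod (herm M (a_v H D p) w)) ^ 2 >= ((D - p) ^ 2 + H ^ 2) * Gt.

Definition Phi (p : R) (w : nat -> C) :=
  tau0 * log2 (1 + (Cmod (herm M (h_c H beta0 lam p) w)) ^ 2 / sigma2) + Fp p (Tf - tau0).

Lemma csum_ext (f g : nat -> C) n : (forall m, (m < n)%nat -> f m = g m) -> csum f n = csum g n.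
Proof.
  induction n; intros Hfg; simpl. reflexivity.
  rewrite IHn. rewrite (Hfg n). reflexivity. lia. intros; apply Hfg; lia.
Qed.

Lemma rsum_ext (f g : nat -> R) n : (forall m, (m < n)%nat -> f m = g m) -> rsum f n = rsum g n.
Proof.
  induction n; intros Hfg; simpl. reflexivity.
  rewrite IHn, Hfg. reflexivity. lia. intros; apply Hfg; lia.
Qed.

Lemma Cmod_expj th : Cmod (expj th) = 1.
Proof.
  unfold Cmod, expj. cbn [fst snd].
  pose proof (sin2_cos2 th). unfold Rsqr in H0.
  replace (cos th ^ 2 + sin th ^ 2) with 1 by nra. apply sqrt_1.
Qed.

Lemma conj_expj_mult th c : Cmult (Cconj (expj th)) (Cmult (RtoC c) (expj th)) = RtoC c.
Proof.
  pose proof (sin2_cos2 th). unfold Rsqr in H0.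
  unfold expj, RtoC, Cconj. apply injective_projections; simpl.
  - transitivity (c * (sin th * sin th + cos th * cos th)). ring. rewrite H0. ring.
  - ring.
Qed.

Lemma feasp_witness p : feasp p -> exists w, Kset p w.
Proof.
  intros Hp. assert (HMp : 0 < INR M) by (apply lt_0_INR; lia).
  set (c := sqrt (Pmax / INR M)).
  assert (Hc2 : c ^ 2 = Pmax / INR M).
  { unfold c. rewrite <- Rsqr_pow2. apply Rsqr_sqrt. apply Rlt_le, Rdiv_lt_0_compat; lra. }
  assert (Hc0 : 0 <= c) by apply sqrt_pos.
  exists (fun m => Cmult (RtoC c) (a_v H D p m)).
  split; [exact Hp | split].
  - unfold normsq. rewrite (rsum_ext _ (fun _ => c ^ 2)).
    rewrite rsum_const, Hc2. right. field. lra.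
    intros m _. rewrite Cmod_mult, Cmod_R. unfold a_v, arr. rewrite Cmod_expj.
    rewrite Rabs_right by lra. ring.
  - unfold herm. rewrite (csum_ext _ (fun _ => RtoC c)).
    rewrite csum_const, Cmod_R. rewrite (Rabs_right (INR M * c)).
    2: apply Rle_ge, Rmult_le_pos; lra.
    rewrite Rpow_mult_distr, Hc2.
    unfold feasp in Hp.
    assert (0 < (D - p) ^ 2 + H ^ 2) by (pose proof (pow2_ge_0 (D - p)); pose proof (pow_lt H 2 HH); lra).
    apply Rle_ge. apply Rge_le in Hp.
    apply Rmult_le_reg_r with (/ ((D - p) ^ 2 + H ^ 2)). apply Rinv_0_lt_compat; lra.
    replace (((D - p) ^ 2 + H ^ 2) * Gt * / ((D - p) ^ 2 + H ^ 2)) with Gt by (field; lra).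
    replace (INR M ^ 2 * (Pmax / INR M) * / ((D - p) ^ 2 + H ^ 2)) with
      (INR M * Pmax / ((D - p) ^ 2 + H ^ 2)) by (field; lra). exact Hp.
    intros m _. unfold a_v, arr. apply conj_expj_mult.
Qed.

Lemma Phi_sq_pos p w : 0 <= (Cmod (herm M (h_c H beta0 lam p) w)) ^ 2 / sigma2.
Proof. apply Rmult_le_pos. apply pow2_ge_0. apply Rlt_le, Rinv_0_lt_compat; lra. Qed.

Lemma gamma_bound p Pm : feasp p -> (forall p' w', Kset p' w' -> Phi p' w' <= Pm) ->
  tau0 * fs p + Fp p (Tf - tau0) <= Pm /\
  (forall w, Kset p w -> Phi p w <= tau0 * fs p + Fp p (Tf - tau0)).
Proof.
  intros Hp HPm. pose proof ln2_pos.
  set (F := Fp p (Tf - tau0)).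
  set (E := snr_set M H D Pmax sigma2 beta0 lam Gt p).
  set (B := exp ((Pm - F) / tau0 * ln 2) - 1).
  assert (HE : forall g, E g -> 0 <= g /\ g <= B).
  { intros g [w [W1 [W2 W3]]].
    assert (HK : Kset p w) by (split; auto).
    pose proof (HPm p w HK) as HPhi. unfold Phi in HPhi. fold F in HPhi.
    rewrite <- W3 in HPhi. subst g. pose proof (Phi_sq_pos p w) as Hg.
    split. exact Hg.
    set (g := Cmod (herm M (h_c H beta0 lam p) w) ^ 2 / sigma2) in *.
    unfold log2 in HPhi.
    assert (ln (1 + g) <= (Pm - F) / tau0 * ln 2).
    { apply Rmult_le_reg_r with (/ ln 2). apply Rinv_0_lt_compat; lra.
      replace ((Pm - F) / tau0 * ln 2 * / ln 2) with ((Pm - F) / tau0) by (field; lra).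
      apply Rmult_le_reg_l with tau0. lra.
      replace (tau0 * ((Pm - F) / tau0)) with (Pm - F) by (field; lra). unfold Rdiv in HPhi. lra. }
    assert (1 + g = exp (ln (1 + g))) by (rewrite exp_ln; lra).
    assert (exp (ln (1 + g)) <= exp ((Pm - F) / tau0 * ln 2)).
    { destruct H1. left; apply exp_increasing; auto. right; f_equal; auto. }
    unfold B. lra. }
  destruct (feasp_witness p Hp) as [w0 Hw0].
  assert (Hg0 : E (Cmod (herm M (h_c H beta0 lam p) w0) ^ 2 / sigma2)).
  { destruct Hw0 as [_ [A1 A2]]. exists w0. auto. }
  destruct (Lub_Rbar_correct E) as [Hub Hleast].
  assert (Hl1 := Hub _ Hg0).
  assert (Hl2 : Rbar_le (Lub_Rbar E) B).
  { apply Hleast. intros g Hg. apply (HE g Hg). }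
  assert (Hgs : gamma_star M H D Pmax sigma2 beta0 lam Gt p = real (Lub_Rbar E)) by reflexivity.
  destruct (Lub_Rbar E) as [r | |] eqn:Er; simpl in Hl1, Hl2; try contradiction.
  assert (Hall : forall g, E g -> g <= r).
  { intros g Hg. exact (Hub g Hg). }
  pose proof (HE _ Hg0) as [Hg00 _].
  assert (Hfs : fs p = log2 (1 + r)) by (unfold fs; rewrite Hgs; reflexivity).
  split.
  - rewrite Hfs. unfold log2.
    assert (ln (1 + r) <= ln (1 + B)) by (apply ln_mono; lra).
    unfold B in H1. replace (1 + (exp ((Pm - F) / tau0 * ln 2) - 1)) with (exp ((Pm - F) / tau0 * ln 2)) in H1 by ring.
    rewrite ln_exp in H1.
    assert (ln (1 + r) / ln 2 <= (Pm - F) / tau0).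
    { apply Rmult_le_reg_r with (ln 2). lra. unfold Rdiv. rewrite Rmult_assoc, Rinv_l, Rmult_1_r by lra.
      exact H1. }
    assert (tau0 * (ln (1 + r) / ln 2) <= tau0 * ((Pm - F) / tau0)) by (apply Rmult_le_compat_l; lra).
    replace (tau0 * ((Pm - F) / tau0)) with (Pm - F) in H3 by (field; lra). lra.
  - intros w Hw. unfold Phi. fold F. rewrite Hfs.
    assert (Hgw : E (Cmod (herm M (h_c H beta0 lam p) w) ^ 2 / sigma2)).
    { destruct Hw as [_ [A1 A2]]. exists w. auto. }
    pose proof (Hall _ Hgw). pose proof (Phi_sq_pos p w).
    apply Rplus_le_compat_r. apply Rmult_le_compat_l. lra.
    unfold log2, Rdiv. apply Rmult_le_compat_r. apply Rlt_le, Rinv_0_lt_compat; lra.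
    apply ln_mono; lra.
Qed.

Lemma sq_le_bound y Q : 0 <= Q -> y ^ 2 <= Q -> Rabs y <= Q + 1.
Proof.
  intros HQ Hy. destruct (Rle_dec (Rabs y) 1). lra.
  assert (Rabs y ^ 2 = y ^ 2) by (rewrite <- Rsqr_pow2, <- Rsqr_abs, Rsqr_pow2; reflexivity).
  assert (Rabs y <= Rabs y ^ 2) by nra. lra.
Qed.

Lemma choose_seq (P : nat -> R -> (nat -> C) -> Prop) :
  (forall n, exists p w, P n p w) -> exists ps ws, forall n, P n (ps n) (ws n).
Proof.
  intros HPP.
  assert (X : forall n, {pw : R * (nat -> C) | P n (fst pw) (snd pw)}).
  { intros n. apply constructive_indefinite_description.
    destruct (HPP n) as [p [w Hpw]]. exists (p, w). exact Hpw. }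
  exists (fun n => fst (proj1_sig (X n))), (fun n => snd (proj1_sig (X n))).
  intros n. exact (proj2_sig (X n)).
Qed.

Lemma feasp_bound p : feasp p -> Rabs p <= Rabs D + INR M * Pmax / Gt + 1.
Proof.
  intros Hp. unfold feasp in Hp.
  assert (HX : 0 < (D - p) ^ 2 + H ^ 2) by (pose proof (pow2_ge_0 (D - p)); pose proof (pow_lt H 2 HH); lra).
  assert (HMP : 0 < INR M * Pmax) by (apply Rmult_lt_0_compat; auto; apply lt_0_INR; lia).
  assert ((D - p) ^ 2 <= INR M * Pmax / Gt).
  { apply Rge_le in Hp.
    assert (Gt * ((D - p) ^ 2 + H ^ 2) <= INR M * Pmax).
    { apply Rmult_le_reg_r with (/ ((D - p) ^ 2 + H ^ 2)). apply Rinv_0_lt_compat; lra.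
      replace (Gt * ((D - p) ^ 2 + H ^ 2) * / ((D - p) ^ 2 + H ^ 2)) with Gt by (field; lra). exact Hp. }
    apply Rmult_le_reg_l with Gt. lra.
    replace (Gt * (INR M * Pmax / Gt)) with (INR M * Pmax) by (field; lra).
    pose proof (pow_lt H 2 HH). nra. }
  pose proof (sq_le_bound (D - p) _ (Rlt_le _ _ (Rdiv_lt_0_compat _ _ HMP HGt)) H0).
  pose proof (Rabs_triang_inv p D). rewrite Rabs_minus_sym in H1. lra.
Qed.

Lemma w_bound w m : normsq M w <= Pmax -> (m < M)%nat ->
  Rabs (fst (w m)) <= Pmax + 1 /\ Rabs (snd (w m)) <= Pmax + 1.
Proof.
  intros Hw Hm.
  assert (Cmod (w m) ^ 2 <= Pmax).
  { eapply Rle_trans; [|exact Hw]. unfold normsq.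
    apply (rsum_le_term (fun m => Cmod (w m) ^ 2)); auto. intros; apply pow2_ge_0. }
  pose proof (sq_le_bound _ _ (Rlt_le _ _ HP) H0).
  rewrite Rabs_right in H1 by (apply Rle_ge, Cmod_ge_0).
  split; eapply Rle_trans; [apply Rabs_fst_le | lra | apply Rabs_snd_le | lra].
Qed.

Definition coord (ps : nat -> R) (ws : nat -> nat -> C) (n i : nat) : R :=
  match i with
  | O => ps n
  | S j => if Nat.even j then fst (ws n (Nat.div2 j)) else snd (ws n (Nat.div2 j))
  end.

Lemma coord_fst ps ws n m : coord ps ws n (S (2 * m)) = fst (ws n m).
Proof. unfold coord. rewrite Nat.even_even, Nat.div2_double. reflexivity. Qed.

Lemma coord_snd ps ws n m : coord ps ws n (S (S (2 * m))) = snd (ws n m).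
Proof.
  unfold coord. replace (S (2 * m)) with (2 * m + 1)%nat by lia.
  rewrite Nat.even_odd. replace (2 * m + 1)%nat with (S (2 * m)) by lia.
  rewrite Nat.div2_succ_double. reflexivity.
Qed.

Lemma cv_hc (u : nat -> R) (l : R) m : is_lim_seq u l ->
  cvC (fun n => h_c H beta0 lam (u n) m) (h_c H beta0 lam l m).
Proof.
  intros Hu. split.
  - apply (cv_comp (fun p => fst (h_c H beta0 lam p m)) u l Hu).
    unfold h_c, a_u, arr, expj, RtoC. simpl. auto_derive. side_tac.
  - apply (cv_comp (fun p => snd (h_c H beta0 lam p m)) u l Hu).
    unfold h_c, a_u, arr, expj, RtoC. simpl. auto_derive. side_tac.
Qed.

Lemma cv_av (u : nat -> R) (l : R) m : is_lim_seq u l ->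
  cvC (fun n => a_v H D (u n) m) (a_v H D l m).
Proof.
  intros Hu. split.
  - apply (cv_comp (fun p => fst (a_v H D p m)) u l Hu).
    unfold a_v, arr, expj. simpl. auto_derive. side_tac.
  - apply (cv_comp (fun p => snd (a_v H D p m)) u l Hu).
    unfold a_v, arr, expj. simpl. auto_derive. side_tac.
Qed.

Lemma Fp_cont_pt p : continuity_pt (fun q => Fp q (Tf - tau0)) p.
Proof.
  apply (lip_cont_pt _ ((Tf - tau0) * Lc)). pose proof Lc_pos. apply Rmult_le_pos; lra.
  intros x y. apply Fp_lip. lra.
Qed.

Lemma Kcompact (ps : nat -> R) (ws : nat -> nat -> C) :
  (forall n, Kset (ps n) (ws n)) ->
  exists phi p w, sincr phi /\ Kset p w /\
    is_lim_seq (fun n => Phi (ps (phi n)) (ws (phi n))) (Phi p w).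
Proof.
  intros HK.
  set (B := Rmax (Rabs D + INR M * Pmax / Gt + 1) (Pmax + 1)).
  destruct (extract (S (2 * M)) (coord ps ws) B) as [phi [l [Hphi Hl]]].
  { intros n i Hi. destruct (HK n) as [K1 [K2 K3]]. unfold coord. destruct i as [|j].
    - eapply Rle_trans. apply feasp_bound; auto. apply Rmax_l.
    - assert (Hj : (Nat.div2 j < M)%nat) by (pose proof (Nat.div2_odd j); destruct (Nat.odd j); simpl in *; lia).
      destruct (w_bound (ws n) (Nat.div2 j) K2 Hj).
      destruct (Nat.even j); (eapply Rle_trans; [eassumption | apply Rmax_r]). }
  set (p := l 0%nat). set (w := fun m => (l (S (2 * m)), l (S (S (2 * m))))).
  assert (Hp : is_lim_seq (fun n => ps (phi n)) p) by (apply (Hl 0%nat); lia).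
  assert (Hw : forall m, (m < M)%nat -> cvC (fun n => ws (phi n) m) (w m)).
  { intros m Hm. split; simpl.
    - apply is_lim_seq_ext with (fun n => coord ps ws (phi n) (S (2 * m))).
      intros n; apply coord_fst. apply Hl. lia.
    - apply is_lim_seq_ext with (fun n => coord ps ws (phi n) (S (S (2 * m)))).
      intros n; apply coord_snd. apply Hl. lia. }
  assert (Hherm_h : cvC (fun n => herm M (h_c H beta0 lam (ps (phi n))) (ws (phi n)))
                        (herm M (h_c H beta0 lam p) w)).
  { unfold herm.
    apply (cvC_csum (fun n m => Cmult (Cconj (h_c H beta0 lam (ps (phi n)) m)) (ws (phi n) m))
                    (fun m => Cmult (Cconj (h_c H beta0 lam p m)) (w m))).
    intros m Hm. apply cvC_mult. apply cvC_conj. apply cv_hc; auto. apply Hw; auto. }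
  assert (Hherm_a : cvC (fun n => herm M (a_v H D (ps (phi n))) (ws (phi n)))
                        (herm M (a_v H D p) w)).
  { unfold herm.
    apply (cvC_csum (fun n m => Cmult (Cconj (a_v H D (ps (phi n)) m)) (ws (phi n) m))
                    (fun m => Cmult (Cconj (a_v H D p m)) (w m))).
    intros m Hm. apply cvC_mult. apply cvC_conj. apply cv_av; auto. apply Hw; auto. }
  exists phi, p, w. split; [exact Hphi | split; [split; [|split] |]].
  - unfold feasp. apply Rle_ge.
    apply (lim_ge_const (fun n => INR M * Pmax / ((D - ps (phi n)) ^ 2 + H ^ 2))).
    + apply (cv_comp (fun q => INR M * Pmax / ((D - q) ^ 2 + H ^ 2)) _ p Hp).
      auto_derive. side_tac.
    + intros n. destruct (HK (phi n)) as [K1 _]. apply Rge_le. exact K1.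
  - apply (lim_le_const (fun n => normsq M (ws (phi n)))).
    + unfold normsq. apply (cv_rsum (fun n m => Cmod (ws (phi n) m) ^ 2) (fun m => Cmod (w m) ^ 2)).
      intros m Hm. apply cv_Cmod2. apply Hw; auto.
    + intros n. destruct (HK (phi n)) as [_ [K2 _]]. exact K2.
  - apply Rle_ge.
    apply (lim_le (fun n => ((D - ps (phi n)) ^ 2 + H ^ 2) * Gt)
                  (fun n => Cmod (herm M (a_v H D (ps (phi n))) (ws (phi n))) ^ 2)).
    + apply (cv_comp (fun q => ((D - q) ^ 2 + H ^ 2) * Gt) _ p Hp). auto_derive. auto.
    + apply cv_Cmod2. exact Hherm_a.
    + intros n. destruct (HK (phi n)) as [_ [_ K3]]. apply Rge_le. exact K3.
  - unfold Phi.
    apply (is_lim_seq_plus' _ _ (tau0 * log2 (1 + Cmod (herm M (h_c H beta0 lam p) w) ^ 2 / sigma2))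
                                (Fp p (Tf - tau0))).
    + apply (cv_comp (fun X => tau0 * log2 (1 + X / sigma2))
                     (fun n => Cmod (herm M (h_c H beta0 lam (ps (phi n))) (ws (phi n))) ^ 2)).
      apply cv_Cmod2. exact Hherm_h.
      unfold log2. auto_derive.
      pose proof (pow2_ge_0 (Cmod (herm M (h_c H beta0 lam p) w))).
      assert (0 <= Cmod (herm M (h_c H beta0 lam p) w) ^ 2 * / sigma2)
        by (apply Rmult_le_pos; auto; apply Rlt_le, Rinv_0_lt_compat; lra).
      repeat split; try lra; try (apply Rgt_not_eq; lra).
    + apply (is_lim_seq_continuous (fun q => Fp q (Tf - tau0)) (fun n => ps (phi n)) p).
      apply Fp_cont_pt. exact Hp.
Qed.

Lemma feasp_D : feasp D.
Proof.
  unfold feasp. replace ((D - D) ^ 2 + H ^ 2) with (H ^ 2) by ring. lra.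
Qed.

Lemma Phi_bounded : exists Bd, forall p w, Kset p w -> Phi p w <= Bd.
Proof.
  apply NNPP. intros Hnb.
  assert (Hn : forall n : nat, exists p w, Kset p w /\ INR n < Phi p w).
  { intros n. apply NNPP. intros Hc. apply Hnb. exists (INR n). intros p w Hk.
    apply Rnot_lt_le. intros Hlt. apply Hc. exists p, w. auto. }
  destruct (choose_seq (fun n p w => Kset p w /\ INR n < Phi p w) Hn) as [ps [ws Hpw]].
  destruct (Kcompact ps ws) as [phi [p [w [Hphi [HK Hlim]]]]].
  { intros n; apply Hpw. }
  apply is_lim_seq_Reals in Hlim.
  destruct (Hlim 1 Rlt_0_1) as [N HN].
  destruct (INR_unbounded (Phi p w + 1)) as [n0 Hn0].
  set (n := Nat.max N n0).
  specialize (HN n ltac:(unfold n; lia)). unfold R_dist in HN.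
  destruct (Hpw (phi n)) as [_ Hv].
  assert (INR n0 <= INR (phi n)) by (apply le_INR; pose proof (sincr_ge phi Hphi n); unfold n in *; lia).
  split_Rabs; lra.
Qed.

Lemma evt : exists p w, Kset p w /\ forall p' w', Kset p' w' -> Phi p' w' <= Phi p w.
Proof.
  destruct Phi_bounded as [Bd HBd].
  set (E := fun v => exists p w, Kset p w /\ v = Phi p w).
  destruct (completeness E) as [s [Hub Hleast]].
  { exists Bd. intros v [p [w [Hk ->]]]. auto. }
  { destruct (feasp_witness D feasp_D) as [w Hw]. exists (Phi D w), D, w. auto. }
  assert (Hn : forall n : nat, exists p w, Kset p w /\ s - / (INR n + 1) < Phi p w).
  { intros n. apply NNPP. intros Hc.
    assert (Hpos : 0 < / (INR n + 1)) by (apply Rinv_0_lt_compat; pose proof (pos_INR n); lra).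
    assert (s <= s - / (INR n + 1)).
    { apply Hleast. intros v [p [w [Hk ->]]]. apply Rnot_lt_le. intros Hlt. apply Hc.
      exists p, w. auto. }
    lra. }
  destruct (choose_seq (fun n p w => Kset p w /\ s - / (INR n + 1) < Phi p w) Hn) as [ps [ws Hpw]].
  destruct (Kcompact ps ws) as [phi [p [w [Hphi [HK Hlim]]]]].
  { intros n; apply Hpw. }
  exists p, w. split; auto.
  assert (Hs : s <= Phi p w).
  { apply Rnot_lt_le. intros Hlt.
    set (e := s - Phi p w).
    apply is_lim_seq_Reals in Hlim.
    destruct (Hlim (e / 2) ltac:(unfold e; lra)) as [N1 HN1].
    destruct (small_inv (e / 2) ltac:(unfold e; lra)) as [N2 HN2].
    set (n := Nat.max N1 N2).
    specialize (HN1 n ltac:(unfold n; lia)). unfold R_dist in HN1.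
    specialize (HN2 (phi n) ltac:(pose proof (sincr_ge phi Hphi n); unfold n in *; lia)).
    destruct (Hpw (phi n)) as [_ Hv].
    unfold e in *. split_Rabs; lra. }
  intros p' w' Hk'. eapply Rle_trans; [|exact Hs]. apply Hub. exists p', w'. auto.
Qed.

Theorem main_thm :
  exists (x : R -> R) (ts : nat -> R),
    optimal M L H D Pmax sigma2 beta0 lam Gt tau0 Tf Vmax x ts /\
    forall t1 t2 : R,
      0 <= t1 <= INR L * Tf -> 0 <= t2 <= INR L * Tf ->
      (exists n : Z, Z.Even n /\ t1 + t2 = IZR n * Tf) ->
      x t1 = x t2.
Proof.
  destruct evt as [p [w [HK Hmax]]].
  set (Pm := Phi p w).
  destruct (gamma_bound p Pm (proj1 HK) Hmax) as [_ Hge].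
  specialize (Hge w HK). fold Pm in Hge.
  exists (xs p), tss. split.
  2: { intros t1 t2 _ _ Hn. apply xs_sym. exact Hn. }
  assert (Hfeas : feasible M L H D Pmax Gt tau0 Tf Vmax (xs p) tss).
  { split.
    - intros s u _ _. apply xs_lip.
    - intros l Hl. destruct (cand_ok p l Hl) as [A1 [A2 A3]].
      repeat split; auto.
      destruct (tss_facts l (proj1 Hl)) as [_ [_ [B3 _]]].
      rewrite xs_hover by (apply B3; lra). exact (proj1 HK). }
  split; auto.
  intros x' ts' Hf'.
  assert (HLT : 0 < INR L * Tf) by (apply Rmult_lt_0_compat; [apply lt_0_INR; lia | lra]).
  unfold objective. unfold Rdiv. apply Rmult_le_compat_r. apply Rlt_le, Rinv_0_lt_compat; auto.
  set (r' := rate M L H D Pmax sigma2 beta0 lam Gt tau0 x' ts').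
  set (r := rate M L H D Pmax sigma2 beta0 lam Gt tau0 (xs p) tss).
  assert (Hfr : forall i, (i < L)%nat -> (INR (S i) - 1) * Tf = INR i * Tf).
  { intros i _. rewrite S_INR. ring. }
  assert (U : forall i, (i < L)%nat ->
             ex_RInt r' (INR i * Tf) (INR (S i) * Tf) /\ RInt r' (INR i * Tf) (INR (S i) * Tf) <= Pm).
  { intros i Hi. rewrite <- (Hfr i Hi).
    destruct (upper_frame x' ts' (S i) Hf' ltac:(lia)) as [X1 X2]. split; auto.
    eapply Rle_trans. exact X2.
    destruct Hf' as [_ Hf2]. destruct (Hf2 (S i) ltac:(lia)) as [_ [_ [_ Hpow]]].
    destruct (gamma_bound (x' (ts' (S i))) Pm Hpow Hmax) as [G1 _]. exact G1. }
  assert (Lw : forall i, (i < L)%nat ->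
             ex_RInt r (INR i * Tf) (INR (S i) * Tf) /\ Pm <= RInt r (INR i * Tf) (INR (S i) * Tf)).
  { intros i Hi. rewrite <- (Hfr i Hi).
    destruct (cand_frame p (S i) ltac:(lia)) as [X1 X2]. split; auto. unfold r. lra. }
  destruct (sum_frames r' L (fun i Hi => proj1 (U i Hi))) as [_ E'].
  destruct (sum_frames r L (fun i Hi => proj1 (Lw i Hi))) as [_ E].
  rewrite E', E.
  eapply Rle_trans. apply (rsum_le_c _ Pm). intros i Hi. apply (U i Hi).
  apply rsum_ge_c. intros i Hi. apply (Lw i Hi).
Qed.

End Main.

Theorem lemma1 (M L : nat) (H D Pmax sigma2 beta0 lam Gt tau0 Tf Vmax : R) :
  (1 <= M)%nat -> (1 <= L)%nat ->
  0 < H -> 0 < D -> 0 < Pmax -> 0 < sigma2 -> 0 < beta0 -> 0 < lam ->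
  0 < Gt -> Gt <= INR M * Pmax / H^2 ->
  0 < tau0 -> tau0 < Tf -> 0 < Vmax ->
  exists (x : R -> R) (ts : nat -> R),
    optimal M L H D Pmax sigma2 beta0 lam Gt tau0 Tf Vmax x ts /\
    forall t1 t2 : R,
      0 <= t1 <= INR L * Tf -> 0 <= t2 <= INR L * Tf ->
      (exists n : Z, Z.Even n /\ t1 + t2 = IZR n * Tf) ->
      x t1 = x t2.
Proof.
  intros. eapply main_thm; eauto.
Qed.
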